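(* Let $G$ be a totally disconnected locally compact group such that every proper commensurated open subgroup of $G$ is compact. Then every continuous homomorphism $\varphi:G\to H$, where $H$ is a totally disconnected locally compact group, has closed image.
   Context: A subgroup $U\leq G$ is commensurated if $gUg^{-1}\cap U$ has finite index in both $U$ and $gUg^{-1}$ for every $g\in G$. *)

(* Defs.v *)
From HB Require Import structures.
From mathcomp Require Import all_boot all_order all_algebra.
From mathcomp Require Import all_classical all_reals all_analysis.
Set Implicit Arguments. Unset Strict Implicit. Unset Printing Implicit Defensive.
Local Open Scope classical_set_scope.

Record topGroup := TopGroup {
  tg_carrier :> topologicalType;
  tg_mul : tg_carrier -> tg_carrier -> tg_carrier;
  tg_inv : tg_carrier -> tg_carrier;
  tg_one : tg_carrier;
  tg_mulA : forall x y z, tg_mul x (tg_mul y z) = tg_mul (tg_mul x y) z;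
  tg_mul1g : forall x, tg_mul tg_one x = x;
  tg_mulVg : forall x, tg_mul (tg_inv x) x = tg_one;
  tg_mul_cont : continuous (fun p : tg_carrier * tg_carrier => tg_mul p.1 p.2);
  tg_inv_cont : continuous tg_inv
}.

Definition tdlc (G : topGroup) : Prop :=
  totally_disconnected [set: G] /\ locally_compact [set: G].

Definition is_subgroup (G : topGroup) (U : set G) : Prop :=
  [/\ U (tg_one G),
      (forall x y, U x -> U y -> U (tg_mul x y)) &
      (forall x, U x -> U (tg_inv x))].

Definition lcoset (G : topGroup) (x : G) (V : set G) : set G :=
  [set y | exists2 v, V v & y = tg_mul x v].

Definition finite_index (G : topGroup) (V U : set G) : Prop :=
  finite_set [set lcoset x V | x in U].

Definition conjset (G : topGroup) (g : G) (U : set G) : set G :=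
  [set y | exists2 u, U u & y = tg_mul (tg_mul g u) (tg_inv g)].

Definition commensurated (G : topGroup) (U : set G) : Prop :=
  forall g : G,
    finite_index (conjset g U `&` U) U /\
    finite_index (conjset g U `&` U) (conjset g U).

Definition group_hom (G H : topGroup) (f : G -> H) : Prop :=
  forall x y, f (tg_mul x y) = tg_mul (f x) (f y).

(* Main.v *)
From HB Require Import structures.
Require Import Defs.
From mathcomp Require Import all_boot all_order all_algebra.
From mathcomp Require Import all_classical all_reals all_analysis.
Local Open Scope classical_set_scope.

Local Infix "•" := (@tg_mul _) (at level 40, left associativity).
Local Notation inv := (@tg_inv _).
Local Notation one := (@tg_one _).

Section Alg.
Context {G : topGroup}.
Implicit Types x y z : G.

Lemma mulVg' x : inv x • x = one. Proof. exact: tg_mulVg. Qed.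
Lemma mul1g' x : one • x = x. Proof. exact: tg_mul1g. Qed.
Lemma mulA' x y z : x • (y • z) = x • y • z. Proof. exact: tg_mulA. Qed.

Lemma mulgV' x : x • inv x = one.
Proof.
rewrite -[X in X = _](mul1g' (x • inv x)) -{1}(mulVg' (inv x)).
by rewrite -mulA' [inv x • (x • inv x)]mulA' mulVg' mul1g' mulVg'.
Qed.
Lemma mulg1' x : x • one = x.
Proof. by rewrite -(mulVg' x) mulA' mulgV' mul1g'. Qed.
Lemma mulKg' x y : inv x • (x • y) = y.
Proof. by rewrite mulA' mulVg' mul1g'. Qed.
Lemma mulKVg' x y : x • (inv x • y) = y.
Proof. by rewrite mulA' mulgV' mul1g'. Qed.
Lemma mulgK' x y : x • y • inv y = x.
Proof. by rewrite -mulA' mulgV' mulg1'. Qed.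
Lemma mulgKV' x y : x • inv y • y = x.
Proof. by rewrite -mulA' mulVg' mulg1'. Qed.
Lemma inv_uniq x y : x • y = one -> x = inv y.
Proof. by move=> h; rewrite -(mulgK' x y) h mul1g'. Qed.
Lemma invK' x : inv (inv x) = x.
Proof. by apply/esym/inv_uniq; rewrite mulgV'. Qed.
Lemma invM' x y : inv (x • y) = inv y • inv x.
Proof. by apply/esym/inv_uniq; rewrite -mulA' mulKg' mulVg'. Qed.
Lemma inv1' : inv (one : G) = one.
Proof. by apply/esym/inv_uniq; rewrite mul1g'. Qed.
Lemma mulg_cancel x y z : x • y = x • z -> y = z.
Proof. by move=> h; rewrite -(mulKg' x y) h mulKg'. Qed.
End Alg.

Section Hom.
Context {G H : topGroup} {phi : G -> H} (hphi : group_hom phi).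
Lemma hom1 : phi one = one.
Proof. apply: (@mulg_cancel _ (phi one)); by rewrite -hphi !mulg1'. Qed.
Lemma homV x : phi (inv x) = inv (phi x).
Proof. by apply: inv_uniq; rewrite -hphi mulVg' hom1. Qed.
End Hom.

Section Cont.
Context {G : topGroup}.
Implicit Types x y z : G.

Lemma mul_cvg (T : Type) (F : set_system T) (FF : Filter F) (f g : T -> G) a b :
  f @ F --> a -> g @ F --> b -> (fun t => f t • g t) @ F --> a • b.
Proof.
move=> fa gb; apply: (@continuous2_cvg _ G G G F FF f g (@tg_mul G) a b) => //.
exact: (@tg_mul_cont G (a, b)).
Qed.

Lemma inv_cvg (T : Type) (F : set_system T) (FF : Filter F) (f : T -> G) a :
  f @ F --> a -> (fun t => inv (f t)) @ F --> inv a.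
Proof. by move=> fa; apply: (cvg_comp _ _ fa); exact: tg_inv_cont. Qed.

Lemma cont_lmul a : continuous (fun x : G => a • x).
Proof. by move=> x; apply: mul_cvg; [exact: cvg_cst|exact: cvg_id]. Qed.

Lemma cont_conj a b : continuous (fun x : G => a • x • b).
Proof. by move=> x; apply: mul_cvg; [apply: mul_cvg; [exact: cvg_cst|exact: cvg_id]|exact: cvg_cst]. Qed.

Lemma open_lmul a (O : set G) : open O -> open [set x | O (a • x)].
Proof. by move=> oO; have := (proj1 (continuousP _) (cont_lmul a) O oO). Qed.

Lemma nbhs_lmul a x (O : set G) : nbhs (a • x) O -> nbhs x [set y | O (a • y)].
Proof. by move=> hO; exact: (cont_lmul a x O hO). Qed.

End Cont.
Section Haus.
Context {H : topGroup}.

Lemma td_closed1 : totally_disconnected [set: H] -> forall x : H, closed [set x].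
Proof. by move=> td x; rewrite -(td x I); apply: component_closed; exact: closedT. Qed.

Lemma td_hausdorff : totally_disconnected [set: H] -> hausdorff_space H.
Proof.
move=> td p q clpq; apply: contrapT => npq.
pose z := inv p • q.
have z1 : z <> one.
  by move=> hz; apply: npq; rewrite -[q](mulKVg' p) -/z hz mulg1'.
have oO : open (~` [set z]) by apply: closed_openC; exact: td_closed1.
have cm : (fun t : H * H => t.1 • inv t.2) @ (one, one) --> one • inv (one : H).
  apply: mul_cvg; first exact: cvg_fst.
  by apply: inv_cvg; exact: cvg_snd.
rewrite inv1' mulg1' in cm.
have : nbhs (one : H) (~` [set z]).
  by apply: open_nbhs_nbhs; split => //= h; apply: z1.
move=> /cm [[A B]] /= [hA hB] sub.
have hN : nbhs (one : H) (A `&` B) by apply: filterI.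
have hNp : nbhs p [set a | (A `&` B) (inv p • a)].
  by apply: nbhs_lmul; rewrite mulVg'.
have hNq : nbhs q [set a | (A `&` B) (inv q • a)].
  by apply: nbhs_lmul; rewrite mulVg'.
have [c [[Ap Bp] [Aq Bq]]] := clpq _ _ hNp hNq.
have := sub (inv p • c, inv q • c); rewrite /=.
move=> /(_ (conj Ap Bq)); apply.
by rewrite invM' invK' -mulA' mulKVg'.
Qed.
End Haus.
Section VD.
Context {H : topGroup}.

Lemma compact_open_nbhs (hH : hausdorff_space H)
  (td : totally_disconnected [set: H]) (K2 K : set H) :
  compact K2 -> compact K -> closed K -> K `<=` K2° -> nbhs (one : H) K ->
  forall O : set H, open O -> O one ->
  exists C : set H, [/\ open C, compact C, C one & C `<=` O].
Proof.
move=> cK2 cK clK KK2 hK O oO O1.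
pose Fam := fun D : set H =>
  [/\ D `<=` K, closed D, exists2 W, open W & D = K `&` W & D one].
pose Q := [set x | forall D, Fam D -> D x].
have FamK : Fam K.
  split => //; [by exists setT; [exact: openT|rewrite setIT]|exact: nbhs_singleton].
have FamI D1 D2 : Fam D1 -> Fam D2 -> Fam (D1 `&` D2).
  move=> [s1 c1 [W1 o1 e1] d1] [s2 c2 [W2 o2 e2] d2]; split.
  - by move=> x [/s1].
  - exact: closedI.
  - by exists (W1 `&` W2); [exact: openI|rewrite e1 e2 setIACA setIid].
  - by split.
have QK : Q `<=` K by move=> x; apply.
have Q1 : Q one by move=> D [].
have clQ : closed Q.
  move=> x clx D FD; have [_ cD _ _] := FD; apply: cD => B nB.
  have [y [Qy By]] := clx B nB; exists y; split => //; exact: Qy.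
have fin Op : open Op -> Q `<=` Op -> exists2 D, Fam D & D `<=` Op.
  move=> oOp QOp; apply: contrapT => nex.
  have ne D : Fam D -> exists x, D x /\ ~ Op x.
    move=> FD; apply: contrapT => nx; apply: nex; exists D => // x Dx.
    apply: contrapT => nOx; apply: nx; by exists x.
  pose F := filter_from Fam (fun D => D `&` ~` Op).
  have FF : ProperFilter F.
    apply: filter_from_proper.
      apply: filter_from_filter; first by exists K.
      move=> D1 D2 f1 f2; exists (D1 `&` D2); first exact: FamI.
      by move=> x [[? ?] ?].
    by move=> D FD; have [x [? ?]] := ne D FD; exists x.
  have cZ : compact (K `&` ~` Op) by apply: compact_closedI => //; exact: open_closedC.
  have FZ : F (K `&` ~` Op) by exists K.
  have [z [[Kz nOz] clz]] := cZ F FF FZ.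
  apply: nOz; apply: QOp => D FD; have [_ cD _ _] := FD; apply: cD => B nB.
  have FD' : F (D `&` ~` Op) by exists D.
  have [y [[Dy _] By]] := clz _ _ FD' nB; by exists y.
have split_ P R : closed P -> closed R -> P `<=` Q -> R `<=` Q ->
    Q `<=` P `|` R -> P `&` R = set0 -> P one -> forall x, R x -> False.
  move=> clP clR PQ RQ QPR PR0 P1 x Rx.
  have PK2 : P `<=` K2° by move=> y /PQ /QK /KK2.
  have nrm := compact_normal_local hH cK2 PK2 clP.
  have snR : set_nbhs P (~` R).
    apply/set_nbhsP; exists (~` R); split => //; first exact: closed_openC.
    by move=> y Py Ry; have : (P `&` R) y by []; rewrite PR0.
  have [C snC clC] := nrm _ snR.
  have [U [oU PU UC]] := (set_nbhsP _ _).1 snC.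
  have clU : closure U `<=` ~` R := subset_trans (closureS UC) clC.
  have [D FD DOp] : exists2 D, Fam D & D `<=` U `|` ~` closure U.
    apply: fin; first by apply: openU => //; apply: closed_openC; exact: closed_closure.
    move=> y /QPR [/PU Uy|Ry']; first by left.
    by right => /clU.
  have [DK cD [W oW eD] D1] := FD.
  have FD' : Fam (D `&` U).
    split.
    - by move=> y [/DK].
    - have -> : D `&` U = D `&` closure U.
        rewrite eqEsubset; split => y [Dy Uy]; split => //; first exact: subset_closure.
        by case: (DOp y Dy).
      by apply: closedI => //; exact: closed_closure.
    - by exists (W `&` U); [exact: openI|rewrite eD setIA].
    - by split => //; apply: PU.
  have [_ Ux] := RQ x Rx _ FD'.
  by apply: (clU x (subset_closure Ux)).
have conQ : connected Q.
  move=> B [b Bb] [C1 oC1 eB1] [C2 cC2 eB2].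
  pose R := Q `&` ~` C1.
  have clR : closed R by apply: closedI => //; exact: open_closedC.
  have clB : closed B by rewrite eB2; exact: closedI.
  have BQ : B `<=` Q by rewrite eB1 => y [].
  have RQ : R `<=` Q by move=> y [].
  have QBR : Q `<=` B `|` R.
    move=> y Qy; case: (pselect (C1 y)) => h; [left; rewrite eB1|right]; by split.
  have BR0 : B `&` R = set0.
    rewrite eqEsubset; split => // y [+ [_ nC]]; by rewrite eB1 => -[].
  case: (pselect (B one)) => B1.
    have R0 := split_ B R clB clR BQ RQ QBR BR0 B1.
    rewrite eqEsubset; split => // y Qy; case: (QBR y Qy) => // /R0 [].
  have R1 : R one.
    split => // C1one; apply: B1; rewrite eB1; by split.
  exfalso; apply: (split_ R B clR clB RQ BQ _ _ R1 b Bb).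
    by move=> y /QBR [?|?]; [right|left].
  by rewrite setIC.
have Qone : Q `<=` [set one].
  have := connected_component_max Q1 (subsetT Q) conQ.
  by rewrite td.
have [D FD DOp] : exists2 D, Fam D & D `<=` O `&` K°.
  apply: fin; first exact: (openI oO (@open_interior _ K)).
  move=> y /Qone ->; by split.
have [DK cD [W oW eD] D1] := FD.
exists D; split => //.
- have -> : D = K° `&` W.
    rewrite eqEsubset; split => y.
      by move=> Dy; split; [case: (DOp y Dy)|move: Dy; rewrite eD => -[]].
    by move=> [/interior_subset Ky Wy]; rewrite eD.
  exact: openI (@open_interior _ K) oW.
- exact: (subclosed_compact cD cK DK).
- by move=> y /DOp [].
Qed.
End VD.
Section VD2.
Context {H : topGroup}.

Lemma co_subgroup (C : set H) : compact C -> open C -> C one ->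
  exists V : set H, [/\ is_subgroup V, open V, compact V & V `<=` C].
Proof.
move=> cC oC C1.
have hN : nbhs (one : H) [set i | forall x, C x -> C (x • i)].
  apply: ((compact_near_coveringP C).1 cC H (nbhs one) (fun i x => C (x • i))).
  move=> x Cx.
  have nC : nbhs (x • one) C by rewrite mulg1'; apply: open_nbhs_nbhs.
  have h := @tg_mul_cont H (x, one) C nC.
  exact: h.
pose V := [set h : H | (forall c, C c -> C (c • h)) /\ (forall c, C c -> C (c • inv h))].
have sV : is_subgroup V.
  split.
  - by split => c Cc; rewrite ?inv1' mulg1'.
  - move=> h k [h1 h2] [k1 k2]; split => c Cc.
      by rewrite mulA'; apply: k1; apply: h1.
    by rewrite invM' mulA'; apply: h2; apply: k2.
  - by move=> h [h1 h2]; split => c Cc; [apply: h2|rewrite invK'; apply: h1].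
have [V1 VM VV] := sV.
have VC : V `<=` C by move=> h [h1 _]; rewrite -(mul1g' h); apply: h1.
have oV : open V.
  rewrite openE => v Vv.
  have hNi : nbhs (one : H) [set i | (forall x, C x -> C (x • inv i))].
    have hN1 : nbhs (inv (one : H)) [set i | forall x, C x -> C (x • i)] by rewrite inv1'.
    exact: (@tg_inv_cont H one _ hN1).
  have : nbhs v [set y | ([set i | forall x, C x -> C (x • i)] `&`
      [set i | (forall x, C x -> C (x • inv i))]) (inv v • y)].
    apply: nbhs_lmul; rewrite mulVg'. exact: filterI.
  apply: filterS => y [n1 n2].
  by rewrite -(mulKVg' v y); apply: VM => //; split.
have clV : closed V.
  rewrite -[V]setCK; apply: open_closedC; rewrite openE => y nVy.
  have : nbhs y [set x | V (inv y • x)].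
    by apply: nbhs_lmul; rewrite mulVg'; apply: open_nbhs_nbhs.
  apply: filterS => x Vyx Vx; apply: nVy.
  have := VM _ _ Vx (VV _ Vyx).
  by rewrite invM' invK' mulKVg'.
exists V; split => //.
exact: (subclosed_compact clV cC VC).
Qed.

Lemma van_dantzig : tdlc H -> forall O : set H, open O -> O one ->
  exists V : set H, [/\ is_subgroup V, open V, compact V & V `<=` O].
Proof.
move=> [td lc] O oO O1.
have hH := td_hausdorff td.
have [K2 hK2 [cK2 clK2]] := lc one I.
rewrite withinET in hK2.
have reg := compact_regular hH cK2 hK2.
have [C nC clC] := reg _ (nbhs_interior hK2).
have cK : compact (closure C).
  apply: (subclosed_compact (@closed_closure _ C) cK2).
  exact: subset_trans clC (@interior_subset _ K2).
have nK : nbhs (one : H) (closure C) by apply: filterS nC; exact: subset_closure.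
have [C' [oC' cC' C'1 C'O]] :=
  compact_open_nbhs hH td K2 (closure C) cK2 cK (@closed_closure _ C) clC nK O oO O1.
have [V [sV oV cV VC']] := co_subgroup C' cC' oC' C'1.
exists V; split => //; exact: subset_trans VC' C'O.
Qed.
End VD2.
Definition pt (H : topGroup) : Type := tg_carrier H.
HB.instance Definition _ (H : topGroup) := Topological.on (pt H).
HB.instance Definition _ (H : topGroup) := isPointed.Build (pt H) (tg_one H).
Lemma cc_of (H : topGroup) (A : set H) : compact A -> cover_compact A.
Proof. move=> cA. have e := (@compact_cover (pt H)).
have : @compact (pt H) A by exact cA. by rewrite e. Qed.

Section Conj.
Context {H : topGroup}.
Lemma conjsetE (h : H) (V : set H) : conjset h V = [set y | V (inv h • y • h)].
Proof.
rewrite eqEsubset; split => y.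
  by move=> [u Vu ->] /=; rewrite !mulA' mulgKV' mulVg' mul1g'.
by move=> /= Vy; exists (inv h • y • h) => //; rewrite !mulA' mulgK' mulgV' mul1g'.
Qed.

Lemma conj_sub (h : H) (V : set H) : is_subgroup V -> is_subgroup (conjset h V).
Proof.
move=> [V1 VM VV]; rewrite conjsetE; split => /=.
- by rewrite mulg1' mulVg'.
- move=> y z Vy Vz; have := VM _ _ Vy Vz.
  by rewrite /= !mulA' mulgK'.
- move=> y Vy; have := VV _ Vy.
  by rewrite /= !invM' invK' mulA'.
Qed.

Lemma conj_open (h : H) (V : set H) : open V -> open (conjset h V).
Proof.
move=> oV; rewrite conjsetE.
exact: (proj1 (continuousP _) (cont_conj (inv h) h) V oV).
Qed.

Lemma conj_compact (h : H) (V : set H) : compact V -> compact (conjset h V).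
Proof.
move=> cV.
have -> : conjset h V = (fun x => h • x • inv h) @` V.
  by rewrite eqEsubset; split => y [u Vu e]; exists u.
apply: continuous_compact => //; apply: continuous_subspaceT.
exact: cont_conj.
Qed.

Lemma lcosetE (x : H) (W : set H) : lcoset x W = [set y | W (inv x • y)].
Proof.
rewrite eqEsubset; split => y; first by move=> [w Ww ->] /=; rewrite mulKg'.
by move=> /= Wy; exists (inv x • y) => //; rewrite mulKVg'.
Qed.
End Conj.

Section Main.
Context {G H : topGroup} (phi : G -> H) (hphi : group_hom phi) (cphi : continuous phi).

Lemma lcoset_pre (W : set H) (u : G) (x : H) : is_subgroup W ->
  lcoset x W (phi u) -> lcoset u (phi @^-1` W) = phi @^-1` (lcoset x W).
Proof.
move=> [W1 WM WV] [w0 Ww0 e]; rewrite eqEsubset; split => y.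
  move=> [l Wl ->]; exists (w0 • phi l); first exact: WM.
  by rewrite hphi e mulA'.
move=> [w Ww e2]; exists (inv u • y); last by rewrite mulKVg'.
rewrite /= hphi (homV hphi) e e2 invM' -mulA' mulKg'.
by apply: WM => //; apply: WV.
Qed.

Lemma fin_index_pre (W V' : set H) : is_subgroup W -> open W -> compact V' ->
  finite_index (phi @^-1` W) (phi @^-1` V').
Proof.
move=> sW oW cV.
have [W1 _ _] := sW.
have [D' sD cov] : finite_subset_cover V' (fun x => lcoset x W) V'.
  apply: (@cc_of H V' cV H V' (fun x => lcoset x W)).
    by move=> i _; rewrite lcosetE; exact: open_lmul.
  by move=> x Vx; exists x => //; exists one => //; rewrite mulg1'.
have fin := finite_image (fun x => phi @^-1` (lcoset x W)) (finite_fset D').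
rewrite /finite_index; apply: (sub_finite_set _ fin).
move=> S [u Vu <-].
have [x D'x hx] := cov (phi u) Vu.
by exists x => //; rewrite (lcoset_pre _ _ _ sW hx).

Qed.

Lemma pre_conj (g : G) (V : set H) :
  phi @^-1` conjset (phi g) V = conjset g (phi @^-1` V).
Proof.
rewrite !conjsetE; apply/seteqP; split => y /=; by rewrite !hphi (homV hphi).
Qed.

Lemma commens (V : set H) : is_subgroup V -> open V -> compact V ->
  commensurated (phi @^-1` V).
Proof.
move=> sV oV cV g.
have sW : is_subgroup (conjset (phi g) V `&` V).
  have [a1 aM aV] := conj_sub (phi g) V sV; have [b1 bM bV] := sV.
  split => //; first by move=> x y [? ?] [? ?]; split; [apply: aM|apply: bM].
  by move=> x [? ?]; split; [apply: aV|apply: bV].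
have oW : open (conjset (phi g) V `&` V) by apply: openI => //; exact: (conj_open (phi g) V oV).
rewrite -pre_conj -preimage_setI.
split; apply: fin_index_pre => //.
exact: conj_compact.
Qed.
End Main.
Theorem mainTheorem18 (G : topGroup) :
  tdlc G ->
  (forall U : set G, is_subgroup U -> open U -> U <> [set: G] ->
     commensurated U -> compact U) ->
  forall (H : topGroup) (phi : G -> H),
    tdlc H -> group_hom phi -> continuous phi -> closed (range phi).
Proof.
move=> _ hyp H phi tdH hphi cphi.
have hH := td_hausdorff tdH.1.
case: (pselect (forall V : set H, is_subgroup V -> open V -> compact V ->
   range phi `<=` V)) => [all|nall].
  have -> : range phi = [set one].
    rewrite eqEsubset; split; last by move=> _ ->; exists one => //; exact: hom1.
    move=> y ry; apply: contrapT => ny.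
    have oO : open (~` [set y]) := closed_openC (td_closed1 tdH.1 y).
    have [V [sV oV cV VO]] := van_dantzig tdH _ oO (fun h => ny (esym h)).
    exact: (VO y (all V sV oV cV y ry)).
  exact: (td_closed1 tdH.1 one).
have [V [sV oV cV [a na]]] : exists V : set H, [/\ is_subgroup V, open V, compact V &
    exists a, ~ V (phi a)].
  apply: contrapT => h; apply: nall => V sV oV cV y [a _ <-].
  apply: contrapT => nV; apply: h; exists V; split => //; by exists a.
have [V1 VM VV] := sV.
pose U := phi @^-1` V.
have sU : is_subgroup U.
  split; rewrite /U /preimage /=.
  - by rewrite (hom1 hphi).
  - by move=> x y Vx Vy; rewrite hphi; apply: VM.
  - by move=> x Vx; rewrite (homV hphi); apply: VV.
have oU : open U := (continuousP _).1 cphi V oV.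
have nU : U <> [set: G] by move=> e; apply: na; have : U a by rewrite e. 
have cU := hyp U sU oU nU (commens phi hphi V sV oV cV).
have cS : compact (phi @` U) := continuous_compact (continuous_subspaceT cphi) cU.
have clS := compact_closed hH cS.
move=> y cly.
have n1 : nbhs y [set x | V (inv y • x)].
  by apply: nbhs_lmul; rewrite mulVg'; apply: open_nbhs_nbhs.
have [s [[a' _ <-] Vs]] := cly _ n1.
have St : (phi @` U) (inv (phi a') • y).
  apply: contrapT => nS.
  have n2 : nbhs y [set x | (V `&` ~` (phi @` U)) (inv (phi a') • x)].
    apply: nbhs_lmul; apply: open_nbhs_nbhs; split.
      by apply: openI => //; exact: closed_openC.
    split => //; have := VV _ Vs; by rewrite invM' invK'.
  have [r [[b _ <-] [Vr nSr]]] := cly _ n2.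
  apply: nSr; exists (inv a' • b); last by rewrite hphi (homV hphi).
  by rewrite /U /preimage /= hphi (homV hphi).
have [u Uu eu] := St.
by exists (a' • u) => //; rewrite hphi eu mulKVg'.
Qed.
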